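(* Let $A$ be an integral domain and let $B=A[u]$ be an overring of $A$ that is flat over $A$, where $u$ is a unit of $B$. Then there is a positive integer $m$ such that $u^{-r}\in A$ for all integers $r\ge m$. Consequently $B$ is a localization of $A$.
   Context: For an integral domain $A$ with field of fractions $K$, an overring of $A$ is a subring of $K$ containing $A$; it is a localization of $A$ if it equals $S^{-1}A$ for some multiplicatively closed set $S$ of nonzero elements of $A$. *)

(* Defs.v *)
From HB Require Import structures.
From mathcomp Require Import all_boot all_order all_algebra.
Set Implicit Arguments. Unset Strict Implicit. Unset Printing Implicit Defensive.
Import Order.TTheory GRing.Theory Num.Theory.
Local Open Scope ring_scope.

(* Subsets of K (overrings) are predicates K -> Prop. *)

Definition emb (A : idomainType) : A -> {fraction A} := @FracField.tofrac A.

Definition adjoin (A : idomainType) (u : {fraction A}) : {fraction A} -> Prop :=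
  fun x => exists p : {poly A}, x = (map_poly (@emb A) p).[u].

Definition bilinear_on (A : idomainType) (B : {fraction A} -> Prop)
  (M P : lmodType A) (phi : M -> {fraction A} -> P) : Prop :=
  [/\ (forall b m1 m2, B b -> phi (m1 + m2) b = phi m1 b + phi m2 b),
      (forall m b1 b2, B b1 -> B b2 -> phi m (b1 + b2) = phi m b1 + phi m b2),
      (forall a m b, B b -> phi (a *: m) b = a *: phi m b) &
      (forall a m b, B b -> phi m (emb a * b) = a *: phi m b)].

(* The element \sum_i m_i (x) b_i of M (x)_A B is zero; characterized by the
   universal property of the tensor product: every A-bilinear map kills it. *)
Definition tensor_zero (A : idomainType) (B : {fraction A} -> Prop)
  (M : lmodType A) (s : seq (M * {fraction A})) : Prop :=
  forall (P : lmodType A) (phi : M -> {fraction A} -> P),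
    bilinear_on B phi -> \sum_(x <- s) phi x.1 x.2 = 0.

(* B (an A-submodule of K) is flat over A: for every injective A-linear map
   f : M -> N, the induced map M (x)_A B -> N (x)_A B is injective. *)
Definition flat_over (A : idomainType) (B : {fraction A} -> Prop) : Prop :=
  forall (M N : lmodType A) (f : {linear M -> N}), injective f ->
  forall s : seq (M * {fraction A}), (forall x, x \in s -> B x.2) ->
    tensor_zero B [seq (f x.1, x.2) | x <- s] -> tensor_zero B s.

Definition is_localization (A : idomainType) (B : {fraction A} -> Prop) : Prop :=
  exists S : A -> Prop,
    [/\ S 1, (forall s t, S s -> S t -> S (s * t)), (forall s, S s -> s != 0) &
        forall x, B x <-> exists a s, S s /\ x = emb a / emb s].

(* Main.v *)
Require Import Defs.
From HB Require Import structures.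
From mathcomp Require Import all_boot all_order all_algebra.
From Stdlib Require Import ClassicalEpsilon.
From mathcomp Require Import ring.
Import GRing.Theory.
Set Implicit Arguments. Unset Strict Implicit. Unset Printing Implicit Defensive.
Local Open Scope ring_scope.

Section Quot.
Variables (R : pzRingType) (V : lmodType R).
Record submod := Submod {
  smem :> V -> Prop;
  smem0 : smem 0;
  smemB : forall x y, smem x -> smem y -> smem (x - y);
  smemZ : forall a x, smem x -> smem (a *: x) }.
Variable S : submod.

Lemma smemN x : S x -> S (- x).
Proof. by move=> h; rewrite -sub0r; apply: smemB => //; apply: smem0. Qed.
Lemma smemD x y : S x -> S y -> S (x + y).
Proof. by move=> hx hy; rewrite -[y]opprK; apply: smemB => //; apply: smemN. Qed.

Definition qrel (x y : V) : bool :=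
  if excluded_middle_informative (S (x - y)) then true else false.
Lemma qrelP x y : reflect (S (x - y)) (qrel x y).
Proof. by rewrite /qrel; case: excluded_middle_informative => h; constructor. Qed.
Lemma qrel_refl x : qrel x x.
Proof. by apply/qrelP; rewrite subrr; apply: smem0. Qed.
Lemma qrel_sym x y : qrel x y -> qrel y x.
Proof. by move/qrelP/smemN; rewrite opprB => h; apply/qrelP. Qed.
Lemma qrel_trans x y z : qrel x y -> qrel y z -> qrel x z.
Proof.
move=> /qrelP h1 /qrelP h2; apply/qrelP.
by have := smemD h1 h2; rewrite addrA subrK.
Qed.

Definition canon (x : V) : V := xchoose (ex_intro (qrel x) x (qrel_refl x)).
Lemma canon_rel x : qrel x (canon x).
Proof. exact: (xchooseP (ex_intro (qrel x) x (qrel_refl x))). Qed.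
Lemma canon_eq x y : qrel x y -> canon x = canon y.
Proof.
move=> h; apply: eq_xchoose => z; apply/idP/idP => h'.
  exact: qrel_trans (qrel_sym h) h'.
exact: qrel_trans h h'.
Qed.
Lemma canonK x : canon (canon x) == canon x.
Proof. by apply/eqP/canon_eq/qrel_sym/canon_rel. Qed.

Record quot := Quot { qval : V; qvalP : canon qval == qval }.
HB.instance Definition _ := [isSub for qval].
HB.instance Definition _ := [Choice of quot by <:].

Definition class (x : V) : quot := Quot (canonK x).
Lemma qvalK p : class (qval p) = p.
Proof. by apply: val_inj => /=; apply/eqP/qvalP. Qed.
Lemma eq_class x y : class x = class y <-> S (x - y).
Proof.
split=> [h|h].
  have : canon x = canon y by move: (congr1 qval h).
  move=> e; apply/qrelP; apply: qrel_trans (canon_rel x) _.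
  by rewrite e; apply: qrel_sym; apply: canon_rel.
by apply: val_inj => /=; apply: canon_eq; apply/qrelP.
Qed.
Lemma class_rel x : S (qval (class x) - x).
Proof. by apply/qrelP/qrel_sym/canon_rel. Qed.

Lemma qindW (P : quot -> Prop) : (forall x, P (class x)) -> forall p, P p.
Proof. by move=> h p; rewrite -(qvalK p). Qed.

Definition qadd p q := class (qval p + qval q).
Definition qopp p := class (- qval p).
Definition qzero := class 0.
Definition qscale a p := class (a *: qval p).

Lemma qaddE x y : qadd (class x) (class y) = class (x + y).
Proof.
apply/eq_class; rewrite opprD addrACA; apply: smemD; apply: class_rel.
Qed.
Lemma qoppE x : qopp (class x) = class (- x).
Proof.
apply/eq_class; rewrite -opprD; apply: smemN; apply: class_rel.
Qed.
Lemma qscaleE a x : qscale a (class x) = class (a *: x).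
Proof.
apply/eq_class; rewrite -scalerBr; apply: smemZ; apply: class_rel.
Qed.

Lemma qaddA : associative qadd.
Proof.
by elim/qindW => x; elim/qindW => y; elim/qindW => z; rewrite !qaddE addrA.
Qed.
Lemma qaddC : commutative qadd.
Proof. by elim/qindW => x; elim/qindW => y; rewrite !qaddE addrC. Qed.
Lemma qadd0 : left_id qzero qadd.
Proof. by elim/qindW => x; rewrite /qzero qaddE add0r. Qed.
Lemma qaddN : left_inverse qzero qopp qadd.
Proof. by elim/qindW => x; rewrite qoppE qaddE addNr. Qed.

HB.instance Definition _ := GRing.isZmodule.Build quot qaddA qaddC qadd0 qaddN.

Lemma classD x y : class x + class y = class (x + y). Proof. exact: qaddE. Qed.
Lemma qscaleA a b p : qscale a (qscale b p) = qscale (a * b) p.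
Proof. by elim/qindW: p => x; rewrite !qscaleE scalerA. Qed.
Lemma qscale1 : left_id 1 qscale.
Proof. by elim/qindW => x; rewrite qscaleE scale1r. Qed.
Lemma qscaleDr : right_distributive qscale +%R.
Proof.
move=> a; elim/qindW => x; elim/qindW => y. by rewrite classD !qscaleE scalerDr -classD.
Qed.
Lemma qscaleDl p : {morph qscale^~ p: a b / a + b}.
Proof.
by elim/qindW: p => x a b; rewrite !qscaleE scalerDl -classD.
Qed.
HB.instance Definition _ := GRing.Zmodule_isLmodule.Build R quot qscaleA qscale1 qscaleDr qscaleDl.

Lemma classZ a x : a *: class x = class (a *: x). Proof. exact: qscaleE. Qed.
Lemma class0 : class 0 = 0. Proof. by []. Qed.
Lemma classB x y : class x - class y = class (x - y).
Proof. by rewrite -classD; congr (_ + _); exact: qoppE. Qed.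
Lemma class_eq0 x : class x = 0 <-> S x.
Proof. by rewrite -class0 eq_class subr0. Qed.
End Quot.

Lemma fracE (A : idomainType) (x : {fraction A}) :
  exists n d, d != 0 /\ x = emb n / emb d.
Proof.
elim/quotW: x => r.
exists (\n_r), (\d_r); split; first exact: denom_ratioP.
rewrite /emb.
have hd : FracField.tofrac (\d_r) != 0 :> {fraction A} by rewrite tofrac_eq0 denom_ratioP.
apply: (mulIf hd). rewrite mulfVK //.
rewrite /GRing.mul /=.
rewrite !piE.
apply/eqmodP. rewrite /= FracField.equivfE /FracField.mulf !numden_Ratio ?mulr1 ?oner_neq0 ?denom_ratioP ?mulf_neq0 //.
by rewrite mulrC.
Qed.

Section KAdef.
Variable A : idomainType.
Definition KA : Type := {fraction A}.
HB.instance Definition _ := GRing.Zmodule.on KA.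
Definition kscale (a : A) (x : KA) : KA := emb a * x.
Lemma kscaleA a b x : kscale a (kscale b x) = kscale (a * b) x.
Proof. by rewrite /kscale /emb rmorphM mulrA. Qed.
Lemma kscale1 : left_id 1 kscale.
Proof. by move=> x; rewrite /kscale /emb rmorph1 mul1r. Qed.
Lemma kscaleDr : right_distributive kscale +%R.
Proof. by move=> a x y; rewrite /kscale mulrDr. Qed.
Lemma kscaleDl x : {morph kscale^~ x: a b / a + b}.
Proof. by move=> a b; rewrite /kscale /emb rmorphD mulrDl. Qed.
HB.instance Definition _ := GRing.Zmodule_isLmodule.Build A KA kscaleA kscale1 kscaleDr kscaleDl.
Lemma KAscaleE a (x : KA) : a *: x = emb a * x.
Proof. by []. Qed.
End KAdef.

Lemma emb_inj (A : idomainType) : injective (@emb A).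
Proof. by move=> a b /eqP; rewrite /emb tofrac_eq => /eqP. Qed.

Lemma hornerEmb (A : idomainType) (p : {poly A}) (x : {fraction A}) :
  (map_poly (@emb A) p).[x] = \sum_(i < size p) emb p`_i * x ^+ i.
Proof.
rewrite horner_coef size_map_inj_poly; last by rewrite /emb rmorph0.
  by apply: eq_bigr => i _; rewrite coef_map.
exact: emb_inj.
Qed.

Lemma regscaleE (A : idomainType) (a c : A^o) : a *: c = a * c.
Proof. by []. Qed.

Section Main.
Variable A : idomainType.
Variables u v : {fraction A}.
Hypothesis huv : u * v = 1.
Variable q0 : {poly A}.
Hypothesis hq0 : v = (map_poly (@emb A) q0).[u].
Local Notation n := (size q0).
Local Notation B := (adjoin u).

Definition inA (x : {fraction A}) := exists a, x = emb a.
Lemma inA0 : inA 0. Proof. by exists 0; rewrite /emb rmorph0. Qed.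
Lemma inA_emb a : inA (emb a). Proof. by exists a. Qed.
Lemma inAB x y : inA x -> inA y -> inA (x - y).
Proof. by move=> [a ->] [b ->]; exists (a - b); rewrite /emb rmorphB. Qed.
Lemma inAD x y : inA x -> inA y -> inA (x + y).
Proof. by move=> [a ->] [b ->]; exists (a + b); rewrite /emb rmorphD. Qed.
Lemma inAM x y : inA x -> inA y -> inA (x * y).
Proof. by move=> [a ->] [b ->]; exists (a * b); rewrite /emb rmorphM. Qed.
Lemma inA_sum (I : finType) (F : I -> {fraction A}) :
  (forall i, inA (F i)) -> inA (\sum_i F i).
Proof. by move=> h; apply: (big_ind inA inA0 inAD) => i _; apply: h. Qed.

Definition Icond (c : A) := forall j : 'I_n, inA (emb c * v ^+ j).

Lemma vuK j k : (j <= k)%N -> v ^+ k * u ^+ j = v ^+ (k - j).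
Proof.
move=> hjk; rewrite -{1}(subnK hjk) exprD -mulrA -exprMn (mulrC v u) huv expr1n mulr1.
by [].
Qed.

Lemma hv_sum : v = \sum_(i < n) emb q0`_i * u ^+ i.
Proof. by rewrite hq0 hornerEmb. Qed.

Lemma Icond_all c : Icond c -> forall m, inA (emb c * v ^+ m).
Proof.
move=> hc m; elim: m {-2}m (leqnn m) => [|M IH] m hm.
  by move: hm; rewrite leqn0 => /eqP ->; rewrite expr0 mulr1; apply: inA_emb.
case: (ltnP m n) => hmn; first exact: (hc (Ordinal hmn)).
case: m hm hmn => [|k] hm hmn.
  by rewrite expr0 mulr1; apply: inA_emb.
rewrite exprSr {2}hv_sum mulr_sumr mulr_sumr.
apply: inA_sum => i.
have hik : (i <= k)%N by rewrite -ltnS (leq_trans (ltn_ord i) hmn).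
have -> : emb c * (v ^+ k * (emb q0`_i * u ^+ i)) = emb q0`_i * (emb c * (v ^+ k * u ^+ i)) by ring.
rewrite vuK //.
apply: inAM; first exact: inA_emb.
by apply: IH; apply: leq_trans (leq_subr i k) _.
Qed.

Definition SI : submod (A^o).
refine (@Submod A (A^o) (Icond : A^o -> Prop) _ _ _).
- by move=> j; rewrite /emb rmorph0 mul0r; apply: inA0.
- move=> x y hx hy j; rewrite /emb rmorphB mulrBl; exact: inAB (hx j) (hy j).
- move=> a x hx j; rewrite regscaleE /emb rmorphM -mulrA; exact: inAM (inA_emb a) (hx j).
Defined.

Definition SA : submod {ffun 'I_n -> KA A}.
refine (@Submod A {ffun 'I_n -> KA A} (fun y : {ffun 'I_n -> KA A} => forall j, inA (y j)) _ _ _).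
- by move=> j; rewrite ffunE; apply: inA0.
- by move=> x y hx hy j; rewrite !ffunE; apply: inAB.
- by move=> a x hx j; rewrite ffunE KAscaleE; apply: inAM (inA_emb a) (hx j).
Defined.

Definition Mq := quot SI.
Definition Nq := quot SA.
Definition yv (c : A) : {ffun 'I_n -> KA A} := [ffun j : 'I_n => (emb c * v ^+ j : KA A)].
Definition fq (m : Mq) : Nq := class SA (yv (qval m)).

Lemma yvB c d : yv c - yv d = yv (c - d).
Proof. by apply/ffunP => j; rewrite !ffunE /emb rmorphB mulrBl. Qed.

Lemma SA_yv c : SA (yv c) <-> Icond c.
Proof. by split=> h j; have := h j; rewrite ?ffunE. Qed.

Lemma fq_class c : fq (class SI c) = class SA (yv c).
Proof.
apply/eq_class; rewrite yvB; apply/SA_yv; exact: (class_rel SI c).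
Qed.

Lemma fq_lin : linear fq.
Proof.
move=> a; elim/qindW => x; elim/qindW => y.
rewrite classZ classD !fq_class classZ classD; congr class.
by apply/ffunP => j; rewrite !ffunE KAscaleE regscaleE /emb rmorphD rmorphM mulrDl mulrA.
Qed.
HB.instance Definition _ := GRing.isLinear.Build A Mq Nq *:%R fq fq_lin.

Lemma fq_inj : injective fq.
Proof.
elim/qindW => x; elim/qindW => y; rewrite !fq_class => /eq_class.
by rewrite yvB => /SA_yv h; apply/eq_class.
Qed.

Lemma B1 : B 1.
Proof. exists 1%:P; rewrite map_polyC hornerC /emb; exact: (esym (@tofrac1 A)). Qed.
Lemma B_emb a : B (emb a).
Proof. by exists a%:P; rewrite map_polyC hornerC. Qed.
Lemma BM x y : B x -> B y -> B (x * y).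
Proof. by move=> [p ->] [q ->]; exists (p * q); rewrite rmorphM hornerM. Qed.
Lemma BX j : B (v ^+ j).
Proof.
elim: j => [|j IH]; first by rewrite expr0; apply: B1.
by rewrite exprS; apply: BM => //; exists q0.
Qed.

Lemma bil_phi0 (M : lmodType A) (P : lmodType A) (phi : M -> {fraction A} -> P) :
  bilinear_on B phi -> forall b, B b -> phi 0 b = 0.
Proof.
case=> h1 _ _ _ b hb; have := h1 b 0 0 hb; rewrite addr0.
by move=> /(congr1 (fun x => x - phi 0 b)); rewrite subrr addrK => ->.
Qed.

Definition delta (i : 'I_n) (b : KA A) : {ffun 'I_n -> KA A} :=
  [ffun k : 'I_n => if k == i then b else 0].

Lemma transfer (P : lmodType A) (phi : Nq -> {fraction A} -> P) :
  bilinear_on B phi -> forall i b, B b -> phi (class SA (delta i b)) 1 = 0.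
Proof.
move=> hphi i b hb; have hphi0 := bil_phi0 hphi.
case: hphi => h1 h2 h3 h4.
have [e [q [hq hbq]]] := fracE b.
have hq' : emb q != 0 by rewrite /emb tofrac_eq0.
set z := class SA (delta i (emb q)^-1).
have e1 : class SA (delta i b) = e *: z.
  rewrite /z classZ; congr class; apply/ffunP => k; rewrite !ffunE.
  by case: ifP => _; rewrite KAscaleE ?mulr0 // hbq.
rewrite e1 (h3 e z 1 B1) -(h4 e z 1 B1).
have -> : emb e * 1 = emb q * b by rewrite hbq mulr1 mulrC divfK.
rewrite (h4 q z b hb) -(h3 q z b hb).
have -> : q *: z = 0.
  rewrite /z classZ; apply/class_eq0 => k; rewrite !ffunE.
  case: ifP => _; rewrite KAscaleE ?mulr0; last exact: inA0.
  by rewrite mulfV //; exists 1; rewrite /emb rmorph1.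
exact: hphi0 b hb.
Qed.

Lemma tz_mapped : tensor_zero B [:: (fq (class SI 1), 1)].
Proof.
move=> P phi hphi; rewrite big_seq1 /= fq_class.
have -> : yv 1 = \sum_(i < n) delta i (v ^+ i).
  apply/ffunP => k; rewrite sum_ffunE ffunE (bigD1 k) //= ffunE eqxx big1 ?addr0.
    by rewrite /emb rmorph1 mul1r.
  by move=> i hik; rewrite ffunE eq_sym (negbTE hik).
rewrite (big_morph (class SA) (fun x y => esym (classD SA x y)) (class0 SA)).
have hphi0 := bil_phi0 hphi.
have hphi' := hphi; case: hphi' => h1 _ _ _.
rewrite (big_morph (phi^~ 1) (fun x y => h1 1 x y B1) (hphi0 1 B1)).
by apply: big1 => i _; apply: transfer hphi i _ (BX i).
Qed.

Definition IB (x : KA A) := exists p : {poly A},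
  (forall k, Icond p`_k) /\ x = (map_poly (@emb A) p).[u].

Lemma Icond_mulr c d : Icond c -> Icond (c * d).
Proof.
move=> hc j; rewrite /emb rmorphM mulrAC; apply: inAM (hc j) (inA_emb d).
Qed.
Lemma Icond_mull d c : Icond c -> Icond (d * c).
Proof. by rewrite mulrC; apply: Icond_mulr. Qed.

Definition SP : submod (KA A).
refine (@Submod A (KA A) IB _ _ _).
- exists 0; split; last by rewrite map_poly0 horner0.
  by move=> k; rewrite coef0; apply: (smem0 SI).
- move=> x y [p [hp ->]] [q [hq ->]]; exists (p - q); split.
    by move=> k; rewrite coefB; exact: (@smemB _ _ SI _ _ (hp k) (hq k)).
  by rewrite raddfB hornerD hornerN.
- move=> a x [p [hp ->]]; exists (a *: p); split.
    by move=> k; rewrite coefZ; apply: Icond_mull.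
  by rewrite map_polyZ hornerZ.
Defined.

Definition Pq := quot SP.
Definition phi (m : Mq) (b : {fraction A}) : Pq := class SP (@emb A (qval m) * b : KA A).

Lemma IB_mul d b : Icond d -> B b -> SP (emb d * b : KA A).
Proof.
move=> hd [p ->]; exists (d *: p); split; last by rewrite map_polyZ hornerZ.
by move=> k; rewrite coefZ; apply: Icond_mulr.
Qed.

Lemma phi_class (c : A) b : B b -> phi (class SI c) b = class SP (emb c * b : KA A).
Proof.
move=> hb; apply/eq_class; rewrite -mulrBl /emb -rmorphB.
exact: IB_mul (class_rel SI c) hb.
Qed.

Lemma phi_bil : bilinear_on B phi.
Proof.
split.
- move=> b m1 m2 hb; elim/qindW: m1 => x; elim/qindW: m2 => y.
  rewrite (classD SI) !phi_class // classD /emb rmorphD mulrDl //.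
- by move=> m b1 b2 _ _; rewrite /phi mulrDr -classD.
- move=> a m b hb; elim/qindW: m => x.
  by rewrite (classZ SI) !phi_class // classZ KAscaleE regscaleE /emb rmorphM mulrA.
- by move=> a m b hb; rewrite /phi classZ KAscaleE mulrCA.
Qed.

Hypothesis hflat : flat_over B.

Lemma IB1 : IB 1.
Proof.
have ht : tensor_zero B [:: (class SI 1, 1)].
  apply: (@hflat Mq Nq fq fq_inj [:: (class SI 1, 1)]).
    by move=> x; rewrite inE => /eqP -> /=; apply: B1.
  exact: tz_mapped.
have := ht Pq phi phi_bil; rewrite big_seq1 /= phi_class; last exact: B1.
by move/class_eq0; rewrite mulr1 /emb rmorph1.
Qed.

Lemma u_neq0 : u != 0.
Proof.
apply/eqP => h0; move: huv; rewrite h0 mul0r => /eqP; rewrite eq_sym oner_eq0.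
by [].
Qed.
Lemma v_eq : v = u^-1.
Proof. by rewrite -[v]mul1r -(mulVf u_neq0) -mulrA huv mulr1. Qed.
Lemma v_neq0 : v != 0.
Proof. by rewrite v_eq invr_eq0 u_neq0. Qed.

Lemma part1 : exists m, (0 < m)%N /\ forall r, (m <= r)%N -> inA (v ^+ r).
Proof.
have [p [hp e1]] := IB1.
exists (size p).+1; split => // r hr.
rewrite -[v ^+ r]mulr1 [X in _ * X]e1 hornerEmb mulr_sumr.
apply: inA_sum => k.
have hk : (k <= r)%N by apply: leq_trans (ltnW (ltn_ord k)) (ltnW hr).
rewrite mulrCA vuK //; apply: Icond_all; exact: hp.
Qed.
End Main.
Theorem theorem4p1 (A : idomainType) (u : {fraction A}) :
  flat_over (adjoin u) ->
  (exists v, adjoin u v /\ u * v = 1) ->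
  (exists m : nat, (0 < m)%N /\
     forall r : nat, (m <= r)%N -> exists a : A, emb a = u ^- r) /\
  is_localization (adjoin u).
Proof.
move=> hflat [v [[q0 hq0] huv]].
have [m [hm hA]] := part1 huv hq0 hflat.
have vinv r : u ^- r = v ^+ r by rewrite (v_eq huv) exprVn.
have hvr0 r : v ^+ r != 0 by rewrite expf_neq0 // (v_neq0 huv).
split.
  exists m; split => // r hr; have [a ha] := hA r hr.
  by exists a; rewrite vinv ha.
exists (fun s => exists r, emb s = v ^+ r); split.
- by exists 0%N; rewrite expr0 /emb; exact: (@tofrac1 A).
- move=> s t [r hs] [r' ht]; exists (r + r')%N.
  have -> : emb (s * t) = emb s * emb t by rewrite /emb rmorphM.
  by rewrite hs ht exprD.
- move=> s [r hs]; apply/eqP => s0; move: hs; rewrite s0 /emb rmorph0 => /esym/eqP.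
  by rewrite (negbTE (hvr0 r)).
- move=> x; split.
  + move=> [p ->]; set r := (m + size p)%N.
    have [s hs] := hA r (leq_addr _ _).
    have [a ha] : inA ((map_poly (@emb A) p).[u] * v ^+ r).
      rewrite hornerEmb mulr_suml; apply: inA_sum => k.
      have hk : (k <= r)%N by rewrite /r (leq_trans (ltnW (ltn_ord k))) // leq_addl.
      rewrite -mulrA [u ^+ k * _]mulrC vuK //; apply: inAM; first exact: inA_emb.
      by apply: hA; rewrite /r -addnBA ?leq_addr // ltnW.
    exists a, s; split; first by exists r.
    by rewrite -ha -hs mulfK // hs.
  + move=> [a [s [[r hs] ->]]]; rewrite hs.
    have -> : (v ^+ r)^-1 = u ^+ r by rewrite (v_eq huv) exprVn invrK.
    apply: BM; first exact: B_emb.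
    by exists 'X^r; rewrite map_polyXn hornerXn.
Qed.
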